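(* For every integer $m\ge1$, the polynomials $G_m(t,\beta)$ satisfy: (i) for all $\beta\in\mathbb{R}$ and $t\neq0$, $t^{m-1}G_m\!\left(\frac1t,1-\beta\right)=G_m(t,\beta)$; (ii) for all $\beta>0$, $G_m(0,\beta)>0$ if $m$ is even and $G_m(0,\beta)<0$ if $m$ is odd; (iii) for all $0<\beta<\frac12$, $G_m(-1,\beta)<0$ if $m\equiv1,2\pmod 4$ and $G_m(-1,\beta)>0$ if $m\equiv0,3\pmod4$; (iv) for all $\frac12<\beta<1$, $G_m(-1,\beta)<0$ if $m\equiv0,1\pmod4$ and $G_m(-1,\beta)>0$ if $m\equiv2,3\pmod4$.
   Context: $G_1(t,\beta)=-1$ and for $m\ge2$, $G_m(t,\beta)=[\beta(t-1)-(m-1)t]G_{m-1}(t,\beta)+t(t-1)\frac{\partial}{\partial t}G_{m-1}(t,\beta)$. *)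

(* Defs.v *)
From HB Require Import structures.
From mathcomp Require Import all_boot all_order all_algebra.
Set Implicit Arguments. Unset Strict Implicit. Unset Printing Implicit Defensive.
Import Order.TTheory GRing.Theory Num.Theory.
Local Open Scope ring_scope.

(* For fixed beta, G_m(., beta) is a polynomial in t.  Gaux beta n = G_{n+1}(t, beta).
   G_1 = -1,  G_m = [beta (t-1) - (m-1) t] G_{m-1} + t (t-1) d/dt G_{m-1}. *)
Fixpoint Gaux (R : comRingType) (beta : R) (n : nat) : {poly R} :=
  match n with
  | 0 => -1
  | n'.+1 =>
      (beta%:P * ('X - 1) - (n'.+1)%:R *: 'X) * Gaux beta n'
      + 'X * ('X - 1) * (Gaux beta n')^`()
  end.

(* G beta m = G_m(t, beta) as a polynomial in t (meaningful for m >= 1). *)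
Definition G (R : comRingType) (beta : R) (m : nat) : {poly R} := Gaux beta m.-1.

(* Main.v *)
Require Import Defs.
From HB Require Import structures.
From mathcomp Require Import all_boot all_order all_algebra.
From mathcomp Require Import ring lra zify.
Import Order.TTheory GRing.Theory Num.Theory.
Set Implicit Arguments. Unset Strict Implicit.
Local Open Scope ring_scope.
Section Coef.
Variable R : comRingType.
Definition Gstep (b : R) (c : R) (q : {poly R}) :=
  (b%:P * ('X - 1) - c *: 'X) * q + 'X * ('X - 1) * q^`().
Lemma GauxS (b : R) n : Gaux b n.+1 = Gstep b (n.+1)%:R (Gaux b n).
Proof. by []. Qed.
Lemma Gstep_expand (b c : R) q : Gstep b c q =
  b%:P * ('X * q) - b%:P * q - c%:P * ('X * q)
  + 'X * ('X * q^`()) - 'X * q^`().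
Proof. rewrite /Gstep -mul_polyC. ring. Qed.
Lemma Gstep_coef0 (b c : R) q : (Gstep b c q)`_0 = - b * q`_0.
Proof.
rewrite Gstep_expand !coefD !coefN !coefCM !coefXM /=. ring.
Qed.
Lemma Gstep_coefS (b c : R) q k : (Gstep b c q)`_k.+1 =
  (b + k%:R - c) * q`_k - (b + (k.+1)%:R) * q`_k.+1.
Proof.
rewrite Gstep_expand !coefD !coefN !coefCM !coefXM /=.
case: k => [|k] /=; rewrite !coef_deriv.
  rewrite mulr0n mulr1n. ring.
ring.
Qed.
Lemma Gaux_coef_gt (b : R) n k : (n < k)%N -> (Gaux b n)`_k = 0.
Proof.
elim: n k => [|n IH] k hk.
  by rewrite /= coefN coefC; case: k hk => // k _; rewrite oppr0.
case: k hk => [//|k] hk.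
rewrite GauxS Gstep_coefS !IH //; last by lia.
by rewrite !mulr0 subr0.
Qed.

Lemma Gaux_rev (b : R) n k : (k <= n)%N -> (Gaux b n)`_k = (Gaux (1-b) n)`_(n-k).
Proof.
elim: n k => [|n IH] k hk.
  by case: k hk.
rewrite !GauxS.
case: k hk => [|k] hk.
  rewrite subn0 Gstep_coef0 Gstep_coefS (Gaux_coef_gt _ (leqnn n.+1)) IH // subn0.
  rewrite mulr0 subr0. ring.
rewrite subSS Gstep_coefS IH; last by lia.
have [->|hlt] := eqVneq k n.
  rewrite (Gaux_coef_gt _ (leqnn n.+1)) subnn Gstep_coef0 mulr0 subr0.
  ring.
have hkn : (k < n)%N by lia.
rewrite IH //.
have [j hj] : exists j, n = (k + j.+1)%N by exists (n - k.+1)%N; lia.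
rewrite hj.
have -> : (k + j.+1 - k = j.+1)%N by lia.
have -> : (k + j.+1 - k.+1 = j)%N by lia.
rewrite Gstep_coefS.
ring.
Qed.
End Coef.
Section Part1.
Variable R : fieldType.
Lemma Gaux_size (b : R) n : (size (Gaux b n) <= n.+1)%N.
Proof. by apply/leq_sizeP => j hj; apply: Gaux_coef_gt. Qed.

Lemma part_i (b t : R) n : t != 0 ->
  t ^+ n * (Gaux (1 - b) n).[t^-1] = (Gaux b n).[t].
Proof.
move=> ht.
rewrite (horner_coef_wide _ (Gaux_size _ _)) (horner_coef_wide _ (Gaux_size _ _)).
rewrite mulr_sumr (reindex_inj rev_ord_inj) /=.
apply: eq_bigr => i _.
have hi : (i <= n)%N by have := ltn_ord i; lia.
rewrite subSS Gaux_rev; last by lia.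
have -> : (n - (n - i) = i)%N by lia.
rewrite exprVn mulrCA; congr (_ * _).
  by have -> : 1 - (1 - b) = b by ring.
by rewrite -{1}(subnK hi) exprD mulrAC divff ?mul1r // expf_neq0.
Qed.

Lemma Gaux_at0 (b : R) n : (Gaux b n).[0] = - (- b) ^+ n.
Proof.
rewrite horner_coef0; elim: n => [|n IH]; first by rewrite coefN coefC expr0.
by rewrite GauxS Gstep_coef0 IH exprS; ring.
Qed.
End Part1.
Lemma Gaux_map (A B : comRingType) (f : {rmorphism A -> B}) (b : A) n :
  map_poly f (Gaux b n) = Gaux (f b) n.
Proof.
elim: n => [|n IH]; first by rewrite /= rmorphN1.
rewrite !GauxS /Gstep -!mul_polyC.
rewrite rmorphD !rmorphM rmorphB !rmorphM rmorphB /=.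
by rewrite !map_polyC map_polyX /= rmorph1 rmorph_nat -deriv_map IH polyC1.
Qed.

Section Deriv2.
Variable R : comRingType.
Definition Dp (p : {poly {poly R}}) : {poly {poly R}} := map_poly (@deriv R) p.

Lemma Dp_add p q : Dp (p + q) = Dp p + Dp q.
Proof. by apply/polyP => i; rewrite /Dp coefD !coef_map /= coefD derivD. Qed.
Lemma Dp_sub p q : Dp (p - q) = Dp p - Dp q.
Proof. by apply/polyP => i; rewrite /Dp coefB !coef_map /= coefB derivB. Qed.
Lemma Dp_opp p : Dp (- p) = - Dp p.
Proof. by apply/polyP => i; rewrite /Dp coefN !coef_map /= coefN derivN. Qed.
Lemma Dp_mul p q : Dp (p * q) = Dp p * q + p * Dp q.
Proof.
apply/polyP => i; rewrite /Dp coefD coef_map /= !coefM.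
rewrite raddf_sum -big_split /=; apply: eq_bigr => j _.
by rewrite derivM !coef_map.
Qed.
Lemma Dp_deriv p : Dp (p^`()) = (Dp p)^`().
Proof. by apply/polyP => i; rewrite /Dp coef_deriv !coef_map /= coef_deriv derivMn. Qed.
Lemma Dp_C c : Dp (c%:P) = (c^`())%:P.
Proof. by rewrite /Dp map_polyC. Qed.
Lemma Dp_X : Dp 'X = 0.
Proof.
apply/polyP => i; rewrite /Dp coef_map /= coefX coef0.
by case: (i == 1%N); rewrite ?derivC // -polyC1 derivC.
Qed.
End Deriv2.
Section Deriv3.
Variable R : comRingType.
Notation bX := ('X : {poly R}).
Lemma Dp_1 : Dp (1 : {poly {poly R}}) = 0.
Proof. by rewrite -polyC1 Dp_C derivC. Qed.
Lemma Dp_nat n : Dp ((n%:R : {poly R})%:P) = 0.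
Proof. by rewrite Dp_C -polyC_natr derivC. Qed.
Lemma Dp_Gstep (q : {poly {poly R}}) n :
  Dp (Gstep bX (n%:R) q) = ('X - 1) * q + (bX%:P * ('X - 1) - n%:R * 'X) * Dp q
     + 'X * ('X - 1) * (Dp q)^`().
Proof.
rewrite /Gstep -!mul_polyC !(Dp_add, Dp_sub, Dp_opp, Dp_mul) Dp_deriv Dp_X Dp_1 Dp_nat.
rewrite Dp_C derivX polyC1 polyC_natr.
move: (Dp q) (Dp q)^`() => d d'. ring.
Qed.

Lemma DG n : Dp (Gaux bX n.+1) = n.+1%:R * ('X - 1) * Gaux bX n.
Proof.
elim: n => [|n IH].
  rewrite GauxS Dp_Gstep [Gaux _ 0]/= Dp_opp Dp_1 oppr0 deriv0.
  ring.
rewrite GauxS Dp_Gstep IH (GauxS _ n) /Gstep !derivM !derivE.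
rewrite -!mul_polyC !polyC_natr.
move: (Gaux bX n) => g. move: (g^`()) => g'. ring.
Qed.
End Deriv3.
Section AN.
Variable R : comRingType.
Notation bX := ('X : {poly R}).
Definition an n : {poly R} := (Gaux bX n).[(-1)%:P].

Lemma Dp_horner (p : {poly {poly R}}) (c : R) : (Dp p).[c%:P] = (p.[c%:P])^`().
Proof.
have hs : (size (Dp p) <= size p)%N by exact: size_poly.
rewrite (horner_coef_wide _ hs) horner_coef raddf_sum /=.
apply: eq_bigr => i _.
by rewrite /Dp coef_map /= -polyC_exp [in RHS]mulrC deriv_mulC mulrC.
Qed.

Lemma an_deriv n : (an n.+1)^`() = - (n.+1%:R *+ 2) * an n.
Proof.
rewrite /an -Dp_horner DG !hornerE /= -polyC_natr hornerC polyCN polyC1.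
move: (Gaux _ _).[_] => g. rewrite -polyC_natr; ring.
Qed.

Lemma an_link (b : R) n : (Gaux b n).[-1] = (an n).[b].
Proof.
have := horner_map (horner_eval b) (Gaux bX n) (-1)%:P.
by rewrite Gaux_map /= !horner_evalE hornerX hornerC => ->.
Qed.
End AN.
Arguments an {R} n.
Lemma Gaux01 (R : comRingType) n : Gaux (0:R) n.+1 = 'X * Gaux 1 n.+1.
Proof.
have d1 : (-1 : {poly R})^`() = 0 by rewrite derivN -polyC1 derivC oppr0.
have g0 : forall b : R, Gaux b 0 = -1 by [].
elim: n => [|n IH].
  rewrite !GauxS /Gstep !g0 d1 -!mul_polyC polyC0 polyC1. ring.
rewrite (GauxS 0 n.+1) IH (GauxS 1 n.+1) /Gstep derivM derivX -!mul_polyC polyC0 polyC1.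
move: (Gaux 1 n.+1) => g. move: (g^`()) => g'. ring.
Qed.

Section Sym.
Variable R : realFieldType.
Lemma an_sym n (b : R) : (an n).[1 - b] * (-1) ^+ n = (an n).[b].
Proof.
have hn : (-1 : R) != 0 by rewrite oppr_eq0 oner_eq0.
have h := part_i b n hn.
rewrite invrN1 in h.
by rewrite -!an_link -h mulrC.
Qed.

Lemma an_half n : odd n -> (an n).[2^-1 : R] = 0.
Proof.
move=> ho; have := an_sym n (2^-1).
have -> : 1 - 2^-1 = 2^-1 :> R by field.
rewrite -signr_odd ho expr1.
move: (an n).[_] => x; lra.
Qed.

Lemma an_zero n : ~~ odd n -> (0 < n)%N -> (an n).[0 : R] = 0.
Proof.
case: n => [//|n] ho _.
have h1 := an_sym n.+1 0.
rewrite subr0 -signr_odd (negPf ho) expr0 mulr1 in h1.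
have h2 : (Gaux (0:R) n.+1).[-1] = - (Gaux (1:R) n.+1).[-1].
  by rewrite Gaux01 hornerM hornerX mulN1r.
rewrite !an_link in h2.
move: h1 h2; move: (an n.+1).[_] (an n.+1).[_] => x y; lra.
Qed.
End Sym.
Section U.
Variable R : realFieldType.
Definition nn (p : {poly R}) := forall i, 0 <= p`_i.

Lemma nn_pos p x : nn p -> p != 0 -> 0 < x -> 0 < p.[x].
Proof.
move=> hn hp hx.
rewrite horner_coef (polySpred hp) big_ord_recr /=.
apply: ltr_wpDl.
  by apply: sumr_ge0 => i _; apply: mulr_ge0 => //; apply: exprn_ge0; apply: ltW.
apply: mulr_gt0; last exact: exprn_gt0.
rewrite lt_def hn andbT.
by have := hp; rewrite -lead_coef_eq0 /lead_coef.
Qed.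

Definition L (q : {poly R}) := q *+ 2 - (1 - 'X *+ 4) * q^`().

Lemma L_add p q : L (p + q) = L p + L q.
Proof. rewrite /L derivD. move: p^`() q^`() => a b; ring. Qed.
Lemma L_Z c q : L (c *: q) = c *: L q.
Proof. rewrite /L derivZ -!mul_polyC. move: q^`() => a; ring. Qed.
Lemma L_0 : L 0 = 0.
Proof. by rewrite /L deriv0 mulr0 mul0rn subr0. Qed.
Lemma L_sum n (F : 'I_n -> {poly R}) : L (\sum_(i < n) F i) = \sum_(i < n) L (F i).
Proof.
elim: n F => [|n IH] F; first by rewrite !big_ord0 L_0.
by rewrite !big_ord_recr /= L_add IH.
Qed.

Fixpoint sb (d : nat) : {poly R} :=
  match d with
  | 0 => (2^-1)%:P
  | e.+1 => ((2 + 4 * (e.+1)%:R)^-1) *: ('X^(e.+1) + (e.+1)%:R *: sb e)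
  end.

Lemma L_sb d : L (sb d) = 'X^d.
Proof.
elim: d => [|d IH].
  by rewrite /L /= derivC mulr0 subr0 expr0 -polyCMn -polyC1; congr (_%:P); field.
rewrite [sb _]/= L_Z L_add L_Z IH.
rewrite /L derivXn /= -!mul_polyC.
set c := (2 + 4 * (d.+1)%:R)^-1.
have hc : c * (2 + 4 * (d.+1)%:R) = 1.
  rewrite /c mulVf //; apply: lt0r_neq0; apply: addr_gt0 => //.
  by apply: mulr_gt0 => //; rewrite ltr0n.
transitivity (c%:P * ((2 + 4 * (d.+1)%:R)%:P * 'X^(d.+1))); last first.
  by rewrite mulrA -polyCM hc mul1r.
congr (_ * _).
rewrite exprS !rmorphD !rmorphM !rmorph_nat.
rewrite /= polyC1. move: ('X^d) => y. ring.
Qed.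
Lemma nn_sb d : nn (sb d).
Proof.
elim: d => [|d IH] i /=.
  by rewrite coefC; case: (i == 0%N) => //; rewrite invr_ge0 ler0n.
rewrite coefZ coefD coefZ coefXn; apply: mulr_ge0.
  rewrite invr_ge0; apply: addr_ge0 => //; apply: mulr_ge0 => //; exact: ler0n.
by apply: addr_ge0; [exact: ler0n | apply: mulr_ge0; [exact: ler0n | exact: IH]].
Qed.

Lemma solveL r : nn r -> exists q, nn q /\ L q = r.
Proof.
move=> hr.
exists (\sum_(i < size r) r`_i *: sb i); split.
  move=> j; rewrite coef_sum; apply: sumr_ge0 => i _.
  by rewrite coefZ; apply: mulr_ge0; [exact: hr | exact: nn_sb].
rewrite L_sum.
rewrite -[in RHS](coefK r) poly_def.
by apply: eq_bigr => i _; rewrite L_Z L_sb.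
Qed.

Lemma prim r : nn r -> exists P, [/\ nn P, P^`() = r & P.[0] = 0].
Proof.
move=> hr.
exists (\sum_(i < size r) (r`_i / (i.+1)%:R) *: 'X^(i.+1)); split.
- move=> j; rewrite coef_sum; apply: sumr_ge0 => i _.
  rewrite coefZ coefXn; apply: mulr_ge0 => //.
  by apply: divr_ge0; [exact: hr | exact: ler0n].
- rewrite raddf_sum /= -[in RHS](coefK r) poly_def.
  apply: eq_bigr => i _; rewrite derivZ derivXn /= -scaler_nat scalerA.
  by rewrite divfK // pnatr_eq0.
- rewrite horner_sum; apply: big1 => i _.
  by rewrite hornerZ hornerXn expr0n /= mulr0.
Qed.

Lemma deriv_eq (p q : {poly R}) (x : R) : p^`() = q^`() -> p.[x] = q.[x] -> p = q.
Proof.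
move=> hd hx; apply/eqP; rewrite -subr_eq0; apply/eqP.
set d := p - q.
have hd' : d^`() = 0 by rewrite /d derivB hd subrr.
have hc : d = (d`_0)%:P.
  apply/polyP => i; rewrite coefC; case: i => [//|i] /=.
  have := congr1 (fun p : {poly R} => p`_i) hd'; rewrite /= coef_deriv coef0 => /eqP.
  by rewrite mulrn_eq0 => /orP [//|/eqP].
have h : d.[x] = 0 by rewrite /d hornerD hornerN hx subrr.
have h0 : d`_0 = 0 by move: h; rewrite {1}hc hornerC.
by rewrite hc h0.
Qed.
End U.

Section Struct.
Variable R : realFieldType.
Definition u : {poly R} := 'X * (1 - 'X).

Lemma d1 : (1 : {poly R})^`() = 0.
Proof. by rewrite -polyC1 derivC. Qed.

Lemma u_deriv : u^`() = 1 - 'X *+ 2.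
Proof. rewrite /u derivM derivB derivX d1. ring. Qed.

Lemma comp1 (Q : {poly R}) : (('X *+ 2 - 1) * (Q \Po u))^`() = L Q \Po u.
Proof.
rewrite derivM deriv_comp u_deriv derivB derivMn derivX d1 /L.
rewrite rmorphB rmorphMn !rmorphM rmorphB rmorph1 rmorphMn /= comp_polyX.
rewrite /u. move: (Q \Po _) (Q^`() \Po _) => a b. ring.
Qed.

Lemma stepQ k (P : {poly R}) : nn P -> P != 0 ->
  an (k.*2) = (-1) ^+ k.+1 *: (P \Po u) ->
  exists Q, [/\ nn Q, Q != 0 & an (k.*2).+1 = (-1) ^+ k *: (('X *+ 2 - 1) * (Q \Po u))].
Proof.
move=> hP hP0 ha.
set c : R := ((k.*2).+1)%:R *+ 2.
have hc : 0 < c by rewrite /c pmulrn_lgt0 // ltr0n.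
have [Q [hQ hLQ]] : exists Q, nn Q /\ L Q = c *: P.
  apply: solveL => i; rewrite coefZ; apply: mulr_ge0; [exact: ltW | exact: hP].
exists Q; split => //.
  apply: contraNneq hP0 => hQ0.
  move: hLQ; rewrite hQ0 L_0 => /esym/eqP; rewrite scaler_eq0 => /orP [|/eqP //].
  by move/eqP => h; move: hc; rewrite h ltxx.
apply: (@deriv_eq _ _ _ (2^-1)).
  rewrite an_deriv ha derivZ comp1 hLQ linearZ /=.
  rewrite -!mul_polyC /c rmorphMn rmorph_nat exprS polyCM polyCN polyC1.
  move: ((-1) ^+ k)%:P (P \Po u) => s p. ring.
rewrite an_half; last by rewrite /= odd_double.
rewrite hornerZ hornerM !hornerE.
have -> : (2^-1 : R) *+ 2 - 1 = 0 by field.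
by rewrite /= mulr0 mul0r.
Qed.

Lemma stepP k (Q : {poly R}) : nn Q -> Q != 0 ->
  an (k.*2).+1 = (-1) ^+ k *: (('X *+ 2 - 1) * (Q \Po u)) ->
  exists P, [/\ nn P, P != 0 & an (k.+1).*2 = (-1) ^+ k.+2 *: (P \Po u)].
Proof.
move=> hQ hQ0 ha.
set c : R := ((k.*2).+2)%:R *+ 2.
have hc : 0 < c by rewrite /c pmulrn_lgt0 // ltr0n.
have [P [hP hP' hP0]] : exists P, [/\ nn P, P^`() = c *: Q & P.[0] = 0].
  apply: prim => i; rewrite coefZ; apply: mulr_ge0; [exact: ltW | exact: hQ].
exists P; split => //.
  apply: contraNneq hQ0 => hPz.
  move: hP'; rewrite hPz deriv0 => /esym/eqP; rewrite scaler_eq0 => /orP [|/eqP //].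
  by move/eqP => h; move: hc; rewrite h ltxx.
rewrite doubleS.
apply: (@deriv_eq _ _ _ 0).
  rewrite an_deriv ha derivZ deriv_comp hP' u_deriv linearZ /=.
  rewrite -!mul_polyC /c rmorphMn rmorph_nat !exprS !polyCM polyCN polyC1.
  move: ((-1) ^+ k)%:P (Q \Po u) => s p. ring.
rewrite an_zero //; last by rewrite -doubleS odd_double.
rewrite hornerZ horner_comp.
by rewrite /u !hornerE hP0 mulr0.
Qed.

Lemma struct k :
  (exists P, [/\ nn P, P != 0 & an (k.*2) = (-1) ^+ k.+1 *: (P \Po u)]) /\
  (exists Q, [/\ nn Q, Q != 0 & an (k.*2).+1 = (-1) ^+ k *: (('X *+ 2 - 1) * (Q \Po u))]).
Proof.
elim: k => [|k [_ [Q [hQ hQ0 hQa]]]].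
  have h0 : exists P, [/\ nn P, P != 0 & an (0.*2) = (-1) ^+ 1 *: (P \Po u)].
    exists 1; split.
    - by move=> i; rewrite coefC; case: (i == 0%N).
    - exact: oner_neq0.
    - by rewrite /an /= hornerN hornerC comp_polyC polyC1 expr1 scaleN1r.
  split => //.
  by case: h0 => P [hP hP0 hPa]; exact: (stepQ hP hP0 hPa).
have [P [hP hP0 hPa]] := stepP hQ hQ0 hQa.
split; first by exists P.
exact: (stepQ hP hP0 hPa).
Qed.
End Struct.

Arguments u {R}.
Section Final.
Variable R : realFieldType.

Lemma u_pos (b : R) : 0 < b < 1 -> 0 < (u : {poly R}).[b].
Proof.
case/andP => h0 h1; rewrite /u !hornerE; apply: mulr_gt0 => //.
by rewrite subr_gt0.
Qed.

Lemma sign_even k (b : R) : 0 < b < 1 -> 0 < (-1) ^+ k.+1 * (an (k.*2)).[b].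
Proof.
move=> hb; have [[P [hP hP0 ha]] _] := struct R k.
rewrite ha hornerZ horner_comp mulrA -exprD -signr_odd oddD addbb expr0 mul1r.
by apply: nn_pos => //; apply: u_pos.
Qed.

Lemma sign_odd k (b : R) : 0 < b < 1 ->
  exists2 y, 0 < y & (an (k.*2).+1).[b] = (-1) ^+ k * ((b *+ 2 - 1) * y).
Proof.
move=> hb; have [_ [Q [hQ hQ0 ha]]] := struct R k.
exists (Q \Po u).[b]; first by rewrite horner_comp; apply: nn_pos => //; apply: u_pos.
by rewrite ha hornerZ hornerM !hornerE.
Qed.

Lemma sgn1 j : (-1) ^+ (j.*2) = 1 :> R.
Proof. by rewrite -signr_odd odd_double expr0. Qed.

Lemma an_cases n (b : R) : 0 < b < 1 ->
  [/\ (n %% 4 = 0)%N -> (an n).[b] < 0,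
      (n %% 4 = 1)%N -> exists2 y, 0 < y & (an n).[b] = (b *+ 2 - 1) * y,
      (n %% 4 = 2)%N -> 0 < (an n).[b] &
      (n %% 4 = 3)%N -> exists2 y, 0 < y & (an n).[b] = - ((b *+ 2 - 1) * y)].
Proof.
move=> hb; set j := (n %/ 4)%N.
have hn := divn_eq n 4.
split => hr.
- have -> : n = (j.*2).*2 by rewrite -!muln2; lia.
  have := sign_even (j.*2) hb; rewrite exprS sgn1 mulr1; move: (an _).[b] => x; lra.
- have -> : n = ((j.*2).*2).+1 by rewrite -!muln2; lia.
  have [y hy ->] := sign_odd (j.*2) hb; exists y => //; by rewrite sgn1 mul1r.
- have -> : n = ((j.*2).+1).*2 by rewrite -!muln2; lia.
  have := sign_even (j.*2).+1 hb; rewrite exprS exprS sgn1 mulr1; move: (an _).[b] => x; lra.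
- have -> : n = (((j.*2).+1).*2).+1 by rewrite -!muln2; lia.
  have [y hy ->] := sign_odd (j.*2).+1 hb; exists y => //; rewrite exprS sgn1 mulr1; move: (_ * y) => z; lra.
Qed.
End Final.

Unset Implicit Arguments.
Unset Strict Implicit.
Theorem lemma4p6 (R : realFieldType) (m : nat) (hm : (1 <= m)%N) :
  (forall (beta t : R), t != 0 ->
     t ^+ m.-1 * (G (1 - beta) m).[t^-1] = (G beta m).[t])
  /\ (forall beta : R, 0 < beta ->
        (~~ odd m -> 0 < (G beta m).[0]) /\ (odd m -> (G beta m).[0] < 0))
  /\ (forall beta : R, 0 < beta < 2^-1 ->
        ((m %% 4 == 1)%N || (m %% 4 == 2)%N -> (G beta m).[-1] < 0) /\
        ((m %% 4 == 0)%N || (m %% 4 == 3)%N -> 0 < (G beta m).[-1]))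
  /\ (forall beta : R, 2^-1 < beta < 1 ->
        ((m %% 4 == 0)%N || (m %% 4 == 1)%N -> (G beta m).[-1] < 0) /\
        ((m %% 4 == 2)%N || (m %% 4 == 3)%N -> 0 < (G beta m).[-1])).
Proof.
case: m hm => [//|n] _.
rewrite /G /=.
split; first by move=> b t ht; apply: part_i.
split.
  move=> b hb; rewrite Gaux_at0 exprNn -signr_odd.
  case: (odd n); rewrite /= ?expr1 ?expr0; split => // _.
  - by rewrite mulN1r opprK exprn_gt0.
  - by rewrite mul1r oppr_lt0 exprn_gt0.
have h2 : (0 : R) < 2^-1 by rewrite invr_gt0.
have h21 : (2^-1 : R) < 1 by rewrite invf_lt1 // ltr1n.
have e2 : (2^-1 : R) *+ 2 = 1 by rewrite -mulr_natr; field.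
split.
  move=> b /andP [hb0 hb1].
  have hb : 0 < b < 1 by rewrite hb0 /= (lt_trans hb1 h21).
  have hneg : b *+ 2 - 1 < 0.
    by rewrite subr_lt0 -e2 ltr_pMn2r.
  have [c0 c1 c2 c3] := an_cases n hb.
  rewrite an_link; split => /orP [] /eqP hr.
  - by apply: c0; lia.
  - have [y hy ->] := c1 ltac:(lia). by rewrite pmulr_llt0.
  - have [y hy ->] := c3 ltac:(lia). by rewrite oppr_gt0 pmulr_llt0.
  - by apply: c2; lia.
move=> b /andP [hb0 hb1].
have hb : 0 < b < 1 by rewrite hb1 andbT (lt_trans h2 hb0).
have hpos : 0 < b *+ 2 - 1 by rewrite subr_gt0 -e2 ltr_pMn2r.
have [c0 c1 c2 c3] := an_cases n hb.
rewrite an_link; split => /orP [] /eqP hr.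
- have [y hy ->] := c3 ltac:(lia). by rewrite oppr_lt0 mulr_gt0.
- by apply: c0; lia.
- have [y hy ->] := c1 ltac:(lia). by rewrite mulr_gt0.
- by apply: c2; lia.
Qed.
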